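(* Let $\mathcal{A},\mathcal{D}$ be categories and let $(\mathcal{E},\mathcal{M})$ be any orthogonal factorization system on $[\mathcal{A},\mathcal{D}]$. If all natural transformations in $\mathcal{M}$ are cartesian, then $(\mathcal{E},\mathcal{M})$ restricts to an orthogonal factorization system on $\mathrm{CartNt}[\mathcal{A},\mathcal{D}]$, the category of all functors $\mathcal{A}\to\mathcal{D}$ and cartesian natural transformations.
   Context: A natural transformation is cartesian if all its naturality squares are pullbacks. An orthogonal factorization system $(\mathcal{E},\mathcal{M})$: both classes contain all isomorphisms and are closed under composition; each commuting square $g\circ e = m\circ f$ with $e\in\mathcal{E}$, $m\in\mathcal{M}$ has a unique diagonal $d$ with $d\circ e=f$, $m\circ d = g$; every morphism factors as $m\circ e$ with $e\in\mathcal{E}$, $m\in\mathcal{M}$. Restriction means intersecting both classes with the cartesian natural transformations. *)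

(* Defs.v *)
From Stdlib Require Import FunctionalExtensionality ProofIrrelevance.
Set Implicit Arguments.
Unset Strict Implicit.

Record Category : Type := {
  Obj :> Type;
  Hom : Obj -> Obj -> Type;
  idm : forall X, Hom X X;
  comp : forall X Y Z, Hom Y Z -> Hom X Y -> Hom X Z;
  comp_assoc : forall X Y Z W (f : Hom X Y) (g : Hom Y Z) (h : Hom Z W),
      comp h (comp g f) = comp (comp h g) f;
  comp_id_l : forall X Y (f : Hom X Y), comp (idm Y) f = f;
  comp_id_r : forall X Y (f : Hom X Y), comp f (idm X) = f
}.

Arguments Hom {c} _ _.
Arguments idm {c} X.
Arguments comp {c X Y Z} _ _.

Record Functor (A D : Category) : Type := {
  fobj :> A -> D;
  fmap : forall X Y, @Hom A X Y -> @Hom D (fobj X) (fobj Y);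
  fmap_id : forall X, fmap (idm X) = idm (fobj X);
  fmap_comp : forall X Y Z (f : @Hom A X Y) (g : @Hom A Y Z),
      fmap (comp g f) = comp (fmap g) (fmap f)
}.
Arguments fmap {A D} f {X Y} _ : rename.

Record NatTrans (A D : Category) (F G : Functor A D) : Type := {
  comp_at :> forall X : A, @Hom D (F X) (G X);
  naturality : forall X Y (f : @Hom A X Y),
      comp (fmap G f) (comp_at X) = comp (comp_at Y) (fmap F f)
}.

Lemma NatTrans_eq (A D : Category) (F G : Functor A D) (a b : NatTrans F G) :
  (forall X, a X = b X) -> a = b.
Proof.
  destruct a as [a na], b as [b nb]; simpl; intros H.
  assert (a = b) by (apply FunctionalExtensionality.functional_extensionality_dep; exact H).
  subst b. f_equal. apply ProofIrrelevance.proof_irrelevance.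
Qed.

Definition nt_id (A D : Category) (F : Functor A D) : NatTrans F F.
Proof.
  refine {| comp_at := fun X => idm (F X) |}.
  intros X Y f. rewrite comp_id_l, comp_id_r. reflexivity.
Defined.

Definition nt_comp (A D : Category) (F G H : Functor A D)
  (b : NatTrans G H) (a : NatTrans F G) : NatTrans F H.
Proof.
  refine {| comp_at := fun X => comp (b X) (a X) |}.
  intros X Y f.
  rewrite comp_assoc, naturality, <- comp_assoc, naturality, comp_assoc.
  reflexivity.
Defined.

Definition FunctorCat (A D : Category) : Category.
Proof.
  refine {| Obj := Functor A D; Hom := @NatTrans A D;
            idm := @nt_id A D; comp := @nt_comp A D |}.
  - intros; apply NatTrans_eq; intros; simpl; apply comp_assoc.
  - intros; apply NatTrans_eq; intros; simpl; apply comp_id_l.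
  - intros; apply NatTrans_eq; intros; simpl; apply comp_id_r.
Defined.

Definition IsPullback (C : Category) (P X Y Z : C)
  (p1 : Hom P X) (p2 : Hom P Y) (f : Hom X Z) (g : Hom Y Z) : Prop :=
  comp f p1 = comp g p2 /\
  forall (Q : C) (q1 : Hom Q X) (q2 : Hom Q Y),
    comp f q1 = comp g q2 ->
    exists! u : Hom Q P, comp p1 u = q1 /\ comp p2 u = q2.

Definition cartesian (A D : Category) (F G : Functor A D) (a : NatTrans F G) : Prop :=
  forall (X Y : A) (f : Hom X Y),
    IsPullback (a X) (fmap F f) (fmap G f) (a Y).

Definition MorClass (C : Category) := forall X Y : C, @Hom C X Y -> Prop.

(* Orthogonal factorization system on the wide subcategory of C whose morphisms
   are those satisfying W (W is assumed to be a wide subcategory; all notions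
   — isomorphisms, squares, diagonals, factorizations — are taken inside it). *)
Definition IsOFS_in (C : Category) (W E M : MorClass C) : Prop :=
  (forall X Y (f : Hom X Y), E X Y f -> W X Y f) /\
  (forall X Y (f : Hom X Y), M X Y f -> W X Y f) /\
  (forall X Y (f : Hom X Y) (g : Hom Y X), W X Y f -> W Y X g ->
       comp g f = idm X -> comp f g = idm Y -> E X Y f /\ M X Y f) /\
  (forall X Y Z (f : Hom X Y) (g : Hom Y Z),
       E X Y f -> E Y Z g -> E X Z (comp g f)) /\
  (forall X Y Z (f : Hom X Y) (g : Hom Y Z),
       M X Y f -> M Y Z g -> M X Z (comp g f)) /\
  (forall (A B X Y : C) (e : Hom A B) (m : Hom X Y) (f : Hom A X) (g : Hom B Y),
       E A B e -> M X Y m -> W A X f -> W B Y g ->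
       comp g e = comp m f ->
       exists d : Hom B X, W B X d /\ comp d e = f /\ comp m d = g /\
         forall d' : Hom B X, W B X d' -> comp d' e = f -> comp m d' = g -> d' = d) /\
  (forall X Y (f : Hom X Y), W X Y f ->
       exists (Z : C) (e : Hom X Z) (m : Hom Z Y),
         E X Z e /\ M Z Y m /\ f = comp m e).

Definition IsOFS (C : Category) (E M : MorClass C) : Prop :=
  IsOFS_in (fun _ _ _ => True) E M.

Definition CartNt (A D : Category) : MorClass (FunctorCat A D) :=
  fun F G a => @cartesian A D F G a.

(* Main.v *)
Require Import Defs.

Lemma cart_comp (A D : Category) (F G H : Functor A D) (a : NatTrans F G) (b : NatTrans G H) :
  cartesian a -> cartesian b -> cartesian (nt_comp b a).
Proof.
  intros Ha Hb X Y f. unfold IsPullback; simpl. split.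
  - rewrite comp_assoc, naturality, <- comp_assoc, naturality, comp_assoc. reflexivity.
  - intros Q q1 q2 Hq.
    destruct (Hb X Y f) as [_ Pb].
    destruct (Pb Q q1 (comp (a Y) q2)) as [v [[Hv1 Hv2] Hvu]].
    { rewrite Hq. symmetry. apply comp_assoc. }
    destruct (Ha X Y f) as [_ Pa].
    destruct (Pa Q v q2 Hv2) as [u [[Hu1 Hu2] Huu]].
    exists u. split. split.
    + rewrite <- comp_assoc, Hu1. exact Hv1.
    + exact Hu2.
    + intros u' [H1 H2]. apply Huu. split; [|exact H2]. symmetry. apply Hvu. split.
      * rewrite comp_assoc. exact H1.
      * rewrite comp_assoc, naturality, <- comp_assoc, H2. reflexivity.
Qed.

Lemma cart_cancel (A D : Category) (F G H : Functor A D) (a : NatTrans F G) (b : NatTrans G H) :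
  cartesian b -> cartesian (nt_comp b a) -> cartesian a.
Proof.
  intros Hb Hba X Y f. split.
  - apply naturality.
  - intros Q q1 q2 Hq.
    destruct (Hb X Y f) as [_ Pb].
    destruct (Hba X Y f) as [_ Pba]. simpl in Pba.
    destruct (Pba Q (comp (b X) q1) q2) as [u [[Hu1 Hu2] Huu]].
    { rewrite comp_assoc, naturality, <- comp_assoc, Hq, comp_assoc. reflexivity. }
    assert (E1 : comp (a X) u = q1).
    { destruct (Pb Q (comp (b X) q1) (comp (a Y) q2)) as [v [_ Hvu]].
      { rewrite comp_assoc, naturality, <- comp_assoc, Hq. reflexivity. }
      transitivity v.
      - symmetry. apply Hvu. split.
        + rewrite comp_assoc. exact Hu1.
        + rewrite comp_assoc, naturality, <- comp_assoc, Hu2. reflexivity.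
      - apply Hvu. split; [reflexivity|exact Hq]. }
    exists u. split. split; assumption.
    intros u' [H1 H2]. apply Huu. split; [|exact H2].
    rewrite <- comp_assoc, H1. reflexivity.
Qed.

Theorem lemma4p8 (A D : Category) (E M : MorClass (FunctorCat A D)) :
  IsOFS E M ->
  (forall (F G : FunctorCat A D) (a : Hom F G), M F G a -> CartNt a) ->
  IsOFS_in (CartNt (A:=A) (D:=D))
    (fun F G a => E F G a /\ CartNt a)
    (fun F G a => M F G a /\ CartNt a).
Proof.
  intros [_ [_ [Hiso [HcE [HcM [Hdiag Hfact]]]]]] HMC.
  split; [intros; tauto|].
  split; [intros; tauto|].
  split.
  { intros X Y f g Wf Wg H1 H2. destruct (Hiso X Y f g I I H1 H2). tauto. }
  split.
  { intros X Y Z f g [E1 C1] [E2 C2]. split; [auto|]. apply cart_comp; assumption. }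
  split.
  { intros X Y Z f g [E1 C1] [E2 C2]. split; [auto|]. apply cart_comp; assumption. }
  split.
  { intros A0 B X Y e m f g [He Ce] [Hm Cm] Wf Wg Hsq.
    destruct (Hdiag A0 B X Y e m f g He Hm I I Hsq) as [d [_ [Hd1 [Hd2 Hdu]]]].
    exists d. split.
    - apply (@cart_cancel A D _ _ _ _ m); [exact Cm|]. change (CartNt (comp m d)). rewrite Hd2. exact Wg.
    - split; [exact Hd1|]. split; [exact Hd2|].
      intros d' _ H1 H2. apply Hdu; auto. }
  { intros X Y f Wf.
    destruct (Hfact X Y f I) as [Z [e [m [He [Hm Hf]]]]].
    exists Z, e, m. split; [|split; [split; [exact Hm|apply HMC; exact Hm]|exact Hf]].
    split; [exact He|].
    apply (@cart_cancel A D _ _ _ _ m); [apply HMC; exact Hm|].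
    change (CartNt (comp m e)). rewrite <- Hf. exact Wf. }
Qed.
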